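(* Let $S(n)=\sum_{i=1}^{n}(-1)^{e(i)}$ for $n\ge1$. Then $$\liminf_{n\to\infty}S(n)=-\infty\qquad\text{and}\qquad\limsup_{n\to\infty}S(n)=+\infty.$$
   Context: The Stern polynomials $B_n(t)\in\mathbb{Z}[t]$ are defined by $B_0(t)=0$, $B_1(t)=1$, and for $n\geq 1$: $B_{2n}(t)=tB_n(t)$, $B_{2n+1}(t)=B_n(t)+B_{n+1}(t)$. For $n\geq1$ let $e(n)=\deg B_n(t)$. *)

(* Defs.v *)
From HB Require Import structures.
From mathcomp Require Import all_boot all_order all_algebra.
Set Implicit Arguments. Unset Strict Implicit. Unset Printing Implicit Defensive.
Import Order.TTheory GRing.Theory Num.Theory.
Local Open Scope ring_scope.

(* Stern polynomials, computed with fuel k (k >= n suffices):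
   B_0 = 0, B_1 = 1, B_{2m} = t B_m, B_{2m+1} = B_m + B_{m+1}. *)
Fixpoint stern_aux (k n : nat) : {poly int} :=
  match k with
  | 0%N => 0
  | k'.+1 =>
    if n == 0%N then 0
    else if n == 1%N then 1
    else if ~~ odd n then 'X * stern_aux k' n./2
    else stern_aux k' n./2 + stern_aux k' n./2.+1
  end.

Definition stern (n : nat) : {poly int} := stern_aux n n.

(* e(n) = deg B_n (for n >= 1, B_n <> 0, size = deg + 1). *)
Definition sdeg (n : nat) : nat := (size (stern n)).-1.

Definition Ssum (n : nat) : int := \sum_(1 <= i < n.+1) (-1) ^+ sdeg i.

(* Main.v *)
Require Import Defs.
From HB Require Import structures.
From mathcomp Require Import all_boot all_order all_algebra zify ring.
Set Implicit Arguments. Unset Strict Implicit. Unset Printing Implicit Defensive.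
Import Order.TTheory GRing.Theory Num.Theory.
Local Open Scope ring_scope.

Lemma stern_fuel k1 : forall k2 n, (n <= k1)%N -> (n <= k2)%N ->
  stern_aux k1 n = stern_aux k2 n.
Proof.
elim: k1 => [|k1 IH] [|k2] n /= h1 h2.
- by [].
- by have -> : n = 0%N by lia.
- by have -> : n = 0%N by lia.
- case: eqP => // n0; case: eqP => // n1.
  have hn := odd_double_half n.
  case: (odd n) hn => /= hn.
  + by rewrite (IH k2) ?(IH k2 n./2.+1) //; lia.
  + by rewrite (IH k2) //; lia.
Qed.

Lemma half_double_S n : (n.*2.+1)./2 = n.
Proof. by rewrite /= uphalf_double. Qed.

Lemma stern_auxS k n : stern_aux k.+1 n =
    if n == 0%N then 0
    else if n == 1%N then 1
    else if ~~ odd n then 'X * stern_aux k n./2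
    else stern_aux k n./2 + stern_aux k n./2.+1.
Proof. by []. Qed.

Lemma stern_even n : (1 <= n)%N -> stern (n.*2) = 'X * stern n.
Proof.
move=> hn; rewrite /stern.
have -> : n.*2 = (n.*2.-1).+1 by lia.
rewrite stern_auxS.
have -> : (n.*2.-1.+1 == 0)%N = false by apply/eqP; lia.
have -> : (n.*2.-1.+1 == 1)%N = false by apply/eqP; lia.
have -> : n.*2.-1.+1 = n.*2 by lia.
rewrite odd_double /= doubleK.
by rewrite (@stern_fuel (n.*2.-1) n n) //; lia.
Qed.

Lemma stern_odd n : (1 <= n)%N -> stern (n.*2.+1) = stern n + stern n.+1.
Proof.
move=> hn; rewrite /stern stern_auxS.
have -> : (n.*2.+1 == 1)%N = false by apply/eqP; lia.
rewrite /= odd_double /= uphalf_double.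
by rewrite (@stern_fuel (n.*2) n n) ?(@stern_fuel (n.*2) n.+1 n.+1) //; lia.
Qed.

Lemma stern1 : stern 1 = 1. Proof. by []. Qed.

Definition nonneg (p : {poly int}) := forall i, 0 <= p`_i.

Lemma size_addnn p q : nonneg p -> nonneg q ->
  size (p + q) = maxn (size p) (size q).
Proof.
wlog: p q / (size q <= size p)%N.
  move=> W hp hq; have [h|h] : (size q <= size p)%N \/ (size p < size q)%N by lia.
  exact: (W p q h hp hq).
  by rewrite addrC maxnC (W q p (ltnW h) hq hp).
move=> hqp hp hq.
have [lt|eq] : (size q < size p)%N \/ size q = size p by lia.
  rewrite size_polyDl //; lia.
rewrite eq maxnn.
have hD := size_polyD p q; rewrite eq maxnn in hD.
case: (posnP (size p)) => [s0|spos]; first by lia.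
case: (leqP (size p) (size (p + q))) => h; first by lia.
have : (size (p + q)%R <= (size p).-1)%N by lia.
move/leq_sizeP/(_ _ (leqnn _)); rewrite coefD => h0.
have lp : p`_(size p).-1 != 0.
  by rewrite -lead_coefE lead_coef_eq0 -size_poly_eq0 -lt0n.
have := hp (size p).-1; have := hq (size p).-1.
move: lp h0; set a := p`_ _; set b := q`_ _ => lp h0 h1 h2.
have: a == 0 by rewrite eq_le h2 andbT -h0 lerDl.
by rewrite (negbTE lp).
Qed.

Lemma stern_pos n : (1 <= n)%N -> stern n != 0 /\ nonneg (stern n).
Proof.
elim: n {-2}n (leqnn n) => [|N IH] n hn h1; first by lia.
case: (ltnP n 2) => h2.
  have -> : n = 1%N by lia.
  rewrite stern1; split; first exact: oner_neq0.
  by move=> i; rewrite coef1 ler0n.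
have hn2 := odd_double_half n.
have hh : (1 <= n./2)%N by lia.
have [Ha Hb] := IH n./2 ltac:(lia) hh.
case: (odd n) hn2 => /= hn2.
  have [Hc Hd] := IH n./2.+1 ltac:(lia) ltac:(lia).
  rewrite -hn2 add1n stern_odd //; split.
    by rewrite -size_poly_eq0 size_addnn // -lt0n leq_max lt0n size_poly_eq0 Ha.
  by move=> i; rewrite coefD addr_ge0.
rewrite -hn2 add0n stern_even //; split.
  by rewrite mulf_neq0 // polyX_eq0.
by move=> i; rewrite coefXM; case: (i == 0)%N.
Qed.

Lemma sdeg_even n : (1 <= n)%N -> sdeg (n.*2) = (sdeg n).+1.
Proof.
move=> hn; have [Ha _] := stern_pos hn.
rewrite /sdeg stern_even // mulrC size_mulX //.
have : (0 < size (stern n))%N by rewrite lt0n size_poly_eq0.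
lia.
Qed.

Lemma sdeg_odd n : (1 <= n)%N -> sdeg (n.*2.+1) = maxn (sdeg n) (sdeg n.+1).
Proof.
move=> hn; have [Ha Hb] := stern_pos hn; have [Hc Hd] := stern_pos (ltn0Sn n).
rewrite /sdeg stern_odd // size_addnn //.
have : (0 < size (stern n))%N by rewrite lt0n size_poly_eq0.
have : (0 < size (stern n.+1))%N by rewrite lt0n size_poly_eq0.
lia.
Qed.

Notation e := sdeg.

Lemma e1 : e 1 = 0%N.
Proof. by rewrite /sdeg stern1 size_poly1. Qed.

Lemma e2 : e 2 = 1%N.
Proof. by rewrite (sdeg_even (n:=1)) // e1. Qed.

Lemma e_step n : (1 <= n)%N -> (e n.+1 <= (e n).+1)%N /\ (e n <= (e n.+1).+1)%N.
Proof.
elim: n {-2}n (leqnn n) => [|N IH] n hn h1; first by lia.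
case: (ltnP n 2) => h2.
  have -> : n = 1%N by lia.
  by rewrite e1 e2.
have hn2 := odd_double_half n.
have hh : (1 <= n./2)%N by lia.
have [Ha Hb] := IH n./2 ltac:(lia) hh.
case: (odd n) hn2 => /= hn2.
  rewrite -hn2 add1n.
  have -> : (n./2.*2.+2 = (n./2.+1).*2)%N by rewrite doubleS.
  rewrite sdeg_even // sdeg_odd //; lia.
rewrite -hn2 add0n sdeg_even // sdeg_odd //; lia.
Qed.

Lemma e_pow k x : (1 <= x)%N -> e (2 ^ k * x) = (e x + k)%N.
Proof.
move=> hx; elim: k => [|k IH]; first by rewrite expn0 mul1n addn0.
rewrite expnS -mulnA mul2n sdeg_even ?IH ?addnS //.
by rewrite muln_gt0 expn_gt0.
Qed.

Definition s (n : nat) : int := (-1) ^+ e n.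

Fixpoint Gv (k : nat) : int * int * int :=
  match k with
  | 0%N => (1, 1, 1)
  | k'.+1 => let: (x, y, z) := Gv k' in (x + y, z - x, z - y)
  end.

Definition Gsel k (q : int) : int :=
  if q == 1 then (Gv k).1.1 else if q == 0 then (Gv k).1.2 else (Gv k).2.

Lemma GselS1 k : Gsel k.+1 1 = Gsel k 1 + Gsel k 0.
Proof. by rewrite /Gsel /=; case: (Gv k) => [[x y] z]. Qed.
Lemma GselS0 k : Gsel k.+1 0 = Gsel k (-1) - Gsel k 1.
Proof. by rewrite /Gsel /=; case: (Gv k) => [[x y] z]. Qed.
Lemma GselSm k : Gsel k.+1 (-1) = Gsel k (-1) - Gsel k 0.
Proof. by rewrite /Gsel /=; case: (Gv k) => [[x y] z]. Qed.

Definition state (m : nat) : int := (e m.+1)%:Z - (e m)%:Z.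

Definition B k m := \sum_(2 ^ k * m <= i < 2 ^ k * m + 2 ^ k) s i.

Lemma s_pow k x : (1 <= x)%N -> s (2 ^ k * x) = (-1) ^+ k * s x.
Proof. by move=> hx; rewrite /s e_pow // exprD mulrC. Qed.

Lemma block k : forall m, (1 <= m)%N -> B k m = s (2 ^ k * m) * Gsel k (state m).
Proof.
elim: k => [|k IH] m hm.
  rewrite /B expn0 mul1n addn1 big_nat1.
  by rewrite /Gsel /=; case: ifP => _; [|case: ifP => _]; rewrite mulr1.
rewrite /B.
have E1 : (2 ^ k.+1 * m = 2 ^ k * m.*2)%N by rewrite expnS -mul2n; lia.
have E2 : (2 ^ k.+1 * m + 2 ^ k.+1 = 2 ^ k * m.*2.+1 + 2 ^ k)%N by rewrite expnS; lia.
have E3 : (2 ^ k * m.*2 + 2 ^ k = 2 ^ k * m.*2.+1)%N by lia.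
rewrite E2 E1 (@big_cat_nat _ _ _ (2 ^ k * m.*2.+1)) /=; last 2 first.
- by rewrite -E3 leq_addr.
- by rewrite leq_addr.
rewrite -{1}E3 -/(B k m.*2) -/(B k m.*2.+1) !IH; try lia.
rewrite !s_pow; try lia.
have Ea : e m.*2 = (e m).+1 by rewrite sdeg_even.
have Eb : e m.*2.+1 = maxn (e m) (e m.+1) by rewrite sdeg_odd.
have Ec : e (m.*2.+1).+1 = (e m.+1).+1 by rewrite -doubleS sdeg_even.
have [st1 st2] := e_step hm.
rewrite /state /s Ea Eb Ec.
move: st1 st2; set a := e m; set b := e m.+1 => st1 st2.
clearbody a b.
set sg := (-1) ^+ k : int.
have [c|[c|c]] : b = a.+1 \/ b = a \/ a = b.+1 by lia.
- rewrite c (_ : maxn a a.+1 = a.+1); last by lia.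
  rewrite (_ : (a.+1)%:Z - (a.+1)%:Z = 0); last by lia.
  rewrite (_ : (a.+2)%:Z - (a.+1)%:Z = 1); last by lia.
  rewrite (_ : (a.+1)%:Z - (a)%:Z = 1); last by lia.
  rewrite GselS1; ring.
- rewrite c maxnn.
  rewrite (_ : (a)%:Z - (a.+1)%:Z = -1); last by lia.
  rewrite (_ : (a.+1)%:Z - (a)%:Z = 1); last by lia.
  rewrite (_ : (a)%:Z - (a)%:Z = 0); last by lia.
  rewrite GselS0 exprS; ring.
- rewrite c (_ : maxn b.+1 b = b.+1); last by lia.
  rewrite (_ : (b.+1)%:Z - (b.+2)%:Z = -1); last by lia.
  rewrite (_ : (b.+1)%:Z - (b.+1)%:Z = 0); last by lia.
  rewrite (_ : (b)%:Z - (b.+1)%:Z = -1); last by lia.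
  rewrite GselSm exprS; ring.
Qed.

Definition G1 k := Gsel k 1.
Definition G0 k := Gsel k 0.
Definition Gm k := Gsel k (-1).

Lemma Ginv k : G1 k + Gm k = 2.
Proof.
elim: k => [|k IH]; first by [].
rewrite /G1 /Gm GselS1 GselSm -/(G1 k) -/(Gm k) -/(G0 k).
by rewrite -IH; ring.
Qed.

Definition T K := \sum_(k < K) (-1) ^+ k * G1 k.

Lemma s1 : s 1 = 1. Proof. by rewrite /s e1. Qed.
Lemma state1 : state 1 = 1. Proof. by rewrite /state e2 e1. Qed.

Lemma Ssum_T K : Ssum (2 ^ K).-1 = T K.
Proof.
rewrite /Ssum prednK ?expn_gt0 //.
elim: K => [|K IH]; first by rewrite /T big_ord0 expn0 big_geq.
rewrite /T big_ord_recr /= -/(T K) -IH.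
rewrite (@big_cat_nat _ _ _ (2 ^ K)) /=; last 2 first.
- by rewrite expn_gt0.
- by rewrite leq_exp2l.
congr (_ + _).
have := block K (ltnSn 0).
rewrite /B muln1 addnn -mul2n -expnS => H.
rewrite -[LHS]/(\sum_(2 ^ K <= i < 2 ^ K.+1) s i) H.
by rewrite -(muln1 (2 ^ K)%N) s_pow // s1 mulr1 state1.
Qed.

Definition alt K : int := \sum_(k < K) (-1) ^+ k.

Lemma alt_odd K : alt K = (odd K)%:R.
Proof.
elim: K => [|K IH]; first by rewrite /alt big_ord0.
rewrite /alt big_ord_recr /= -/(alt K) IH -signr_odd.
by case: (odd K).
Qed.

Definition g k := G1 k - G0 k - 1.
Definition f k := (-1) ^+ k * g k.

Lemma G1S k : G1 k.+1 = G1 k + G0 k.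
Proof. by rewrite /G1 GselS1. Qed.
Lemma G0S k : G0 k.+1 = 2 - 2 * G1 k.
Proof.
rewrite /G0 GselS0 -/(G1 k) -/(Gm k).
have := Ginv k; lia.
Qed.

Lemma Tform K : 4 * T K = 4 * alt K - 1 - f K.
Proof.
elim: K => [|K IH]; first by rewrite /T /alt !big_ord0 /f /g /G1 /G0 /Gsel.
rewrite /T big_ord_recr /= -/(T K) /alt big_ord_recr /= -/(alt K).
rewrite mulrDr IH /f /g G1S G0S exprS.
rewrite /f /g; ring.
Qed.

Lemma grec k : g k.+2 = g k.+1 - 2 * g k.
Proof. rewrite /g !G1S !G0S G1S; ring. Qed.

Lemma frec k : f k.+2 = - f k.+1 - 2 * f k.
Proof. rewrite /f grec !exprS; ring. Qed.

Lemma f0 : f 0 = -1. Proof. by rewrite /f /g /G1 /G0 /Gsel. Qed.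
Lemma f1 : f 1 = -1.
Proof. by rewrite /f /g G1S G0S /G1 /G0 /Gsel. Qed.

Lemma fnorm k : f k.+1 ^+ 2 + f k.+1 * f k + 2 * f k ^+ 2 = 4 * 2 ^+ k.
Proof.
elim: k => [|k IH]; first by rewrite f0 f1.
have -> : (4:int) * 2 ^+ k.+1 = 2 * (4 * 2 ^+ k) by rewrite exprS; ring.
rewrite frec -IH; ring.
Qed.

From Stdlib Require Import Classical.

Lemma unb (h : nat -> int)
  (rec : forall k, h k.+2 = - h k.+1 - 2 * h k)
  (nrm : forall k, h k.+1 ^+ 2 + h k.+1 * h k + 2 * h k ^+ 2 = 4 * 2 ^+ k)
  (M : int) (K0 : nat) : exists2 k, (K0 <= k)%N & M < h k.
Proof.
apply: NNPP => hne.
have hle : forall k, (K0 <= k)%N -> h k <= M.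
  move=> k hk; rewrite leNgt; apply/negP => hlt; apply: hne; by exists k.
have hge : forall k, (K0 <= k)%N -> - M <= h k.
  move=> k hk; have := hle k.+1 (leqW hk); have := hle k.+2 (leqW (leqW hk)).
  have := rec k; lia.
pose k := (K0 + `|M| * `|M|)%N.
have hk : (K0 <= k)%N by rewrite leq_addr.
have a1 := hle k hk; have a2 := hge k hk.
have a3 := hle k.+1 (leqW hk); have a4 := hge k.+1 (leqW hk).
have n := nrm k.
have E : (2:int) ^+ k = Posz (2 ^ k)%N by rewrite -natz natrX.
have lt1 : (`|M| * `|M| < 2 ^ (`|M| * `|M|))%N by apply: ltn_expl.
have lt2 : (2 ^ (`|M| * `|M|) <= 2 ^ k)%N by rewrite leq_exp2l // leq_addl.
have sq : M * M <= Posz (`|M| * `|M|)%N by lia.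
rewrite E in n.
move: n a1 a2 a3 a4 sq lt1 lt2; set x := h k.+1; set y := h k => n a1 a2 a3 a4 sq lt1 lt2.
have lt3 : Posz (`|M| * `|M|)%N < Posz (2 ^ k)%N by rewrite ltz_nat; exact: leq_trans lt1 lt2.
have bd : x ^+ 2 + x * y + 2 * y ^+ 2 <= 4 * (M * M) by rewrite !expr2; nia.
lia.
Qed.

Theorem mainTheorem16 :
  (forall (M : int) (N : nat), exists2 n : nat, (N <= n)%N & Ssum n <= M) /\
  (forall (M : int) (N : nat), exists2 n : nat, (N <= n)%N & M <= Ssum n).
Proof.
have hN : forall N K, (N <= K)%N -> (N <= (2 ^ K).-1)%N.
  move=> N K h; have := ltn_expl K (ltnSn 1); lia.
have hA : forall K, 0 <= alt K <= 1 by move=> K; rewrite alt_odd; case: (odd K).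
split=> M N.
- have [K hK hf] := unb frec fnorm (3 - 4 * M) N.
  exists (2 ^ K).-1; first exact: hN.
  rewrite Ssum_T; have := Tform K; have := hA K; lia.
- have [K hK hf] := unb (h := fun k => - f k) (fun k => ltac:(rewrite /= frec; ring))
    (fun k => ltac:(rewrite /= -fnorm; ring)) (4 * M + 1) N.
  exists (2 ^ K).-1; first exact: hN.
  rewrite Ssum_T; have := Tform K; have := hA K; move: hf => /= hf; lia.
Qed.
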